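(* Let $\varphi$ be an own-peak-only rule on $\mathcal{E}_{\mathcal{SP}}$. If $\varphi$ is envy-free, or if $\varphi$ satisfies the equal division lower bound, then $\varphi$ meets the equal division guarantee.
   Context: Let $N=\{1,\dots,n\}$ be a finite set of agents. A preference $R_i$ is a continuous complete preorder on $\mathbb{R}_+\cup\{\infty\}$ ($P_i$ strict, $I_i$ indifference); its peak $p(R_i)$ is the set of maximal elements. $R_i$ is single-peaked if $p(R_i)$ is a singleton (identified with its element) and for $x,x'\in\mathbb{R}_+$, $xP_ix'$ whenever $x'<x\le p(R_i)$ or $p(R_i)\le x<x'$; $\mathcal{SP}$ is the set of these. An economy is $(R,\Omega)$, $R\in\mathcal{SP}^n$, $\Omega>0$; $\mathcal{E}_{\mathcal{SP}}$ is the set of economies; a rule is a map $\varphi:\mathcal{E}_{\mathcal{SP}}\to\mathbb{R}^n_+$ with $\sum_j\varphi_j(R,\Omega)=\Omega$. Own-peak-only: $p(R_i')=p(R_i)$ implies $\varphi_i(R,\Omega)=\varphi_i(R_i',R_{-i},\Omega)$. Envy-free: for all economies and $i\ne j$, $\varphi_i(R,\Omega)R_i\varphi_j(R,\Omega)$. Equal division lower bound: for all economies and $i$, $\varphi_i(R,\Omega)R_i\frac{\Omega}{n}$. Equal division guarantee: for all economies and $i$ with $p(R_i)=\Omega/n$, $\varphi_i(R,\Omega)I_i\frac{\Omega}{n}$. *)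

(* Defs.v *)
(* Consumption space R_+ ∪ {∞} is the
   subset [0, +oo] of the extended reals \bar R, with its usual topology. *)
From HB Require Import structures.
From mathcomp Require Import all_boot all_order all_algebra.
From mathcomp Require Import all_classical all_reals all_analysis.
Set Implicit Arguments. Unset Strict Implicit. Unset Printing Implicit Defensive.
Import Order.TTheory GRing.Theory Num.Theory.
Local Open Scope classical_set_scope.
Local Open Scope ring_scope.

Section Defs.
Variable R : realType.

Definition X : set (\bar R) := [set x | (0 <= x)%E].

Definition pref := \bar R -> \bar R -> Prop.
Definition strict (Ri : pref) x y := Ri x y /\ ~ Ri y x.
Definition indiff (Ri : pref) x y := Ri x y /\ Ri y x.

Definition is_preference (Ri : pref) : Prop :=
  (forall x y, X x -> X y -> Ri x y \/ Ri y x) /\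
  (forall x y z, X x -> X y -> X z -> Ri x y -> Ri y z -> Ri x z) /\
  (forall y, X y -> closed [set x | X x /\ Ri x y]) /\
  (forall y, X y -> closed [set x | X x /\ Ri y x]).

Definition peak (Ri : pref) : set (\bar R) :=
  [set x | X x /\ forall y, X y -> Ri x y].

Definition single_peaked (Ri : pref) : Prop :=
  is_preference Ri /\
  exists p, peak Ri = [set p] /\
    forall x x' : R, 0 <= x -> 0 <= x' ->
      (((x' < x)%R /\ (x%:E <= p)%E) \/ ((p <= x%:E)%E /\ (x < x')%R)) ->
      strict Ri x%:E x'%:E.

Variable n : nat.

Definition profile := 'I_n -> pref.

Definition economy (Rp : profile) (Om : R) : Prop :=
  (forall i, single_peaked (Rp i)) /\ 0 < Om.

(* a candidate rule: its values only matter on economies *)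
Definition rule_fun := profile -> R -> 'I_n -> R.

Definition is_rule (phi : rule_fun) : Prop :=
  forall Rp Om, economy Rp Om ->
    (forall i, 0 <= phi Rp Om i) /\ \sum_(i < n) phi Rp Om i = Om.

Definition upd (Rp : profile) (i : 'I_n) (Ri' : pref) : profile :=
  fun j => if j == i then Ri' else Rp j.

Definition own_peak_only (phi : rule_fun) : Prop :=
  forall Rp Om i Ri', economy Rp Om -> single_peaked Ri' ->
    peak Ri' = peak (Rp i) ->
    phi Rp Om i = phi (upd Rp i Ri') Om i.

Definition envy_free (phi : rule_fun) : Prop :=
  forall Rp Om, economy Rp Om -> forall i j, i != j ->
    Rp i (phi Rp Om i)%:E (phi Rp Om j)%:E.

Definition equal_division_lower_bound (phi : rule_fun) : Prop :=
  forall Rp Om, economy Rp Om -> forall i,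
    Rp i (phi Rp Om i)%:E (Om / n%:R)%:E.

Definition equal_division_guarantee (phi : rule_fun) : Prop :=
  forall Rp Om, economy Rp Om -> forall i,
    peak (Rp i) = [set (Om / n%:R)%:E] ->
    indiff (Rp i) (phi Rp Om i)%:E (Om / n%:R)%:E.

End Defs.

(* Main.v *)
Require Import Defs.
From HB Require Import structures.
From mathcomp Require Import all_boot all_order all_algebra.
From mathcomp Require Import all_classical all_reals all_analysis.
From mathcomp Require Import ring lra.
Set Implicit Arguments. Unset Strict Implicit. Unset Printing Implicit Defensive.
Import Order.TTheory GRing.Theory Num.Theory.
Local Open Scope classical_set_scope.
Local Open Scope ring_scope.

Definition dist (R : realType) (p a b : R) (z : \bar R) : \bar R :=
  match z with
  | EFin r => (if r <= p then a * (p - r) else b * (r - p))%:E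
  | _ => +oo%E end.

Definition vpref (R : realType) (p a b : R) : pref R :=
  fun x y => (dist p a b x <= dist p a b y)%E.

Lemma mulle (R : realType) (a u t : R) : 0 < a -> (a * u <= t) = (u <= t / a).
Proof. by move=> ha; rewrite ler_pdivlMr // mulrC. Qed.

Lemma mulge (R : realType) (a u t : R) : 0 < a -> (t <= a * u) = (t / a <= u).
Proof. by move=> ha; rewrite ler_pdivrMr // mulrC. Qed.

Lemma dist_ge0 (R : realType) (p a b : R) z : 0 < a -> 0 < b -> (0 <= dist p a b z)%E.
Proof.
move=> ha hb.
case: z => [r||] //=; rewrite lee_fin; case: ifP => h;
  [idtac|move/negbT: h; rewrite -ltNge => h]; apply: mulr_ge0; lra.
Qed.

Lemma closedX (R : realType) : closed (@X R).
Proof. exact: closed_ereal_le_ereal. Qed.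

Lemma Xcase (R : realType) (z : \bar R) : @X R z ->
  (exists2 r, 0 <= r & z = r%:E) \/ z = +oo%E.
Proof.
case: z => [r||]; rewrite /X /=.
- by rewrite lee_fin => h; left; exists r.
- by right.
- by rewrite leeNy_eq.
Qed.

Lemma closed_lo (R : realType) (p a b t : R) : 0 < a -> 0 < b -> 0 <= t ->
  closed [set x | @X R x /\ (dist p a b x <= t%:E)%E].
Proof.
move=> ha hb ht.
have -> : [set x | @X R x /\ (dist p a b x <= t%:E)%E] =
  @X R `&` [set x | ((p - t / a)%:E <= x)%E] `&` [set x | (x <= (p + t / b)%:E)%E].
  have hta : 0 <= t / a by apply: divr_ge0 => //; lra.
  have htb : 0 <= t / b by apply: divr_ge0 => //; lra.
  apply/seteqP; split => z /=.
    case=> hX; have := hX; case/Xcase => [[r hr ->]|->] /=; last by rewrite leye_eq.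
    rewrite !lee_fin; case: ifP => h hd.
      by rewrite mulle // in hd; split; [split|]; rewrite ?/X /= ?lee_fin; lra.
    move/negbT: h; rewrite -ltNge => h.
    by rewrite mulle // in hd; split; [split|]; rewrite ?/X /= ?lee_fin; lra.
  case=> [[hX]]; have := hX; case/Xcase => [[r hr ->]|->] /=; last by rewrite leye_eq.
  rewrite !lee_fin => h1 h2.
  split; first by rewrite /X /= lee_fin.
  case: ifP => h; rewrite mulle //; lra.
apply: closedI; [apply: closedI|].
- exact: closedX.
- exact: closed_ereal_le_ereal.
- exact: closed_ereal_ge_ereal.
Qed.

Lemma closed_hi (R : realType) (p a b t : R) : 0 < a -> 0 < b -> 0 <= t ->
  closed [set x | @X R x /\ (t%:E <= dist p a b x)%E].
Proof.
move=> ha hb ht.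
have -> : [set x | @X R x /\ (t%:E <= dist p a b x)%E] =
  @X R `&` ([set x | (x <= (p - t / a)%:E)%E] `|` [set x | ((p + t / b)%:E <= x)%E]).
  have hta : 0 <= t / a by apply: divr_ge0 => //; lra.
  have htb : 0 <= t / b by apply: divr_ge0 => //; lra.
  apply/seteqP; split => z /=.
    case=> hX; have := hX; case/Xcase => [[r hr ->]|->] /=; last first.
      by move=> _; split; [rewrite /X /= leey|right; rewrite leey].
    rewrite !lee_fin; case: ifP => h hd.
      by rewrite mulge // in hd; split; [rewrite /X /= lee_fin|left]; lra.
    move/negbT: h; rewrite -ltNge => h.
    by rewrite mulge // in hd; split; [rewrite /X /= lee_fin|right]; lra.
  case=> hX; have := hX; case/Xcase => [[r hr ->]|->] /=; last first.
    by move=> _; split; rewrite /X /= leey.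
  rewrite !lee_fin => -[h1|h1]; (split; first by rewrite /X /= lee_fin);
    rewrite ?lee_fin; case: ifP => h; rewrite mulge //; try lra.
  all: try (move/negbT: h; rewrite -ltNge => h; lra).
  have tb0 : t / b = 0 by lra.
  have t0 : t = 0.
    by move/eqP: tb0; rewrite mulf_eq0 invr_eq0 (gt_eqF hb) orbF => /eqP.
  by rewrite t0 mul0r; lra.
apply: closedI.
- exact: closedX.
- apply: closedU.
  + exact: closed_ereal_ge_ereal.
  + exact: closed_ereal_le_ereal.
Qed.

Lemma vpref_sp (R : realType) (p a b : R) : 0 < p -> 0 < a -> 0 < b ->
  single_peaked (vpref p a b) /\ peak (vpref p a b) = [set p%:E].
Proof.
move=> hp ha hb.
have hpk : peak (vpref p a b) = [set p%:E].
  apply/seteqP; split => z /=.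
    case=> hX hall; have := hall p%:E; rewrite /X /= lee_fin => /(_ (ltW hp)).
    rewrite /vpref /= lexx subrr mulr0.
    case: z hX {hall} => [r||] //=; rewrite /X /= !lee_fin => hr.
      case: ifP => h hd; congr EFin.
        have : 0 <= a * (p - r) by apply: mulr_ge0; lra.
        move=> h0; have h1 : a * (p - r) = 0 by apply/eqP; rewrite eq_le hd h0.
        move/eqP: h1; rewrite mulf_eq0 gt_eqF //= subr_eq0 => /eqP ->//.
      move/negbT: h; rewrite -ltNge => h.
      have : 0 < b * (r - p) by apply: mulr_gt0; lra.
      lra.
  move=> ->; split; first by rewrite /X /= lee_fin; lra.
  move=> y hy; rewrite /vpref /= lexx subrr mulr0; exact: dist_ge0.
split => //; split; last first.
  exists p%:E; split => // x x' hx hx' [[h1 h2]|[h1 h2]]; rewrite ?lee_fin in h2 h1;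
    rewrite /strict /vpref /= ?lee_fin.
    have hx'p : x' <= p by lra.
    by rewrite h2 hx'p; (split; [|apply/negP; rewrite -ltNge]); nra.
  have hx'p : (x' <= p) = false by apply/negbTE; rewrite -ltNge; lra.
  rewrite hx'p; case: ifP => h; [have ex : x = p by lra|].
    by rewrite ex; (split; [|apply/negP; rewrite -ltNge]); nra.
  by (split; [|apply/negP; rewrite -ltNge]); nra.
split; first by move=> x y _ _; rewrite /vpref; apply/orP; apply: le_total.
split; first by move=> x y z _ _ _; rewrite /vpref; apply: le_trans.
have key : forall y, @X R y -> (exists2 t, 0 <= t & dist p a b y = t%:E) \/ dist p a b y = +oo%E.
  case=> [r||] //= _; last by right.
  left; eexists; last by reflexivity.
  have := dist_ge0 p r%:E ha hb; rewrite /= lee_fin; exact.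
rewrite /vpref; split=> y /key [[t ht ->]|->].
- exact: closed_lo.
- have -> : [set x | @X R x /\ (dist p a b x <= +oo)%E] = @X R.
    by apply/seteqP; split => z /= //; [case|split => //; rewrite leey].
  exact: closedX.
- exact: closed_hi.
- have -> : [set x | @X R x /\ (+oo <= dist p a b x)%E] = @X R `&` [set x | (+oo%E <= x)%E].
    apply/seteqP; split => z /=; case: z => [r||] //=; rewrite /X /= ?leey ?leye_eq ?leeNy_eq //.
    1,2: by case.
  apply: closedI; [exact: closedX | exact: closed_ereal_le_ereal].
Qed.

Lemma sum_ge_term (R : realType) (n : nat) (g : 'I_n -> R) i :
  (forall j, 0 <= g j) -> g i <= \sum_(j < n) g j.
Proof.
move=> hg; rewrite (bigD1 i) //= lerDl; apply: sumr_ge0 => j _; exact: hg.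
Qed.

Theorem lemma5 (R : realType) (n : nat) (phi : rule_fun R n) :
  is_rule phi -> own_peak_only phi ->
  (envy_free phi \/ equal_division_lower_bound phi) ->
  equal_division_guarantee phi.
Proof.
move=> hrule hopo hcase Rp Om hec i hpk.
set pp := Om / n%:R.
have hpeak : peak (Rp i) pp%:E by rewrite hpk.
case: hpeak => hXpp hppall.
have hphi0 := (hrule Rp Om hec).1 i.
have hXx : @X R (phi Rp Om i)%:E by rewrite /X /= lee_fin.
case: hcase => [hef|hedlb]; last first.
  by split; [exact: hedlb | exact: hppall].
suff -> : phi Rp Om i = pp by split; apply: hppall.
have hn : (0 < n)%N by case: n i {phi hrule hopo hef Rp hec hpk pp hXpp hppall hphi0 hXx} => [[]|].
have hnR : (0 < n%:R :> R) by rewrite ltr0n.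
have hOm : 0 < Om := hec.2.
have hpp : 0 < pp by apply: divr_gt0.
have hOmpp : \sum_(j < n) pp = Om.
  by rewrite sumr_const card_ord -mulr_natr /pp divfK // gt_eqF.
set x := phi Rp Om i.
have gen : forall a b, 0 < a -> 0 < b ->
    let Rq := upd Rp i (vpref pp a b) in
    [/\ economy Rq Om, phi Rq Om i = x & Rq i = vpref pp a b].
  move=> a b ha hb Rq.
  have [hsp hpk'] := vpref_sp hpp ha hb.
  have hecq : economy Rq Om.
    split; last exact: hOm.
    by move=> j; rewrite /Rq /upd; case: ifP => _ //; apply: hec.1.
  split => //; last by rewrite /Rq /upd eqxx.
  by rewrite /x (hopo Rp Om i (vpref pp a b)) // hpk' hpk.
case: (ltgtP x pp) => // hx.
-
  set b := (pp - x) / 2 / Om.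
  have hb : 0 < b by apply: divr_gt0 => //; apply: divr_gt0; lra.
  have [hecq hxq hRqi] := gen 1 b ltr01 hb.
  set Rq := upd Rp i (vpref pp 1 b) in hecq hxq hRqi.
  have [hq0 hqsum] := hrule Rq Om hecq.
  case: (pselect (exists j, pp < phi Rq Om j)) => [[j hj]|hno].
    have hij : i != j by apply/eqP => hij; move: hj; rewrite -hij hxq; lra.
    have := hef Rq Om hecq i j hij; rewrite hRqi hxq /vpref /= lee_fin.
    rewrite (ltW hx) (negbTE (_ : ~~ (phi Rq Om j <= pp))); last by rewrite -ltNge.
    have hyO : phi Rq Om j <= Om by have := sum_ge_term j hq0; rewrite hqsum.
    have hbO : b * Om = (pp - x) / 2 by rewrite /b divfK // gt_eqF.
    have : b * (phi Rq Om j - pp) <= b * Om by rewrite ler_pM2l //; lra.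
    lra.
  have hle : forall j, 0 <= pp - phi Rq Om j.
    move=> j; rewrite subr_ge0 leNgt; apply/negP => hj; apply: hno; by exists j.
  have := sum_ge_term i hle; rewrite sumrB hOmpp hqsum subrr hxq; lra.
-
  set a := (x - pp) / 2 / pp.
  have ha : 0 < a by apply: divr_gt0 => //; apply: divr_gt0; lra.
  have [hecq hxq hRqi] := gen a 1 ha ltr01.
  set Rq := upd Rp i (vpref pp a 1) in hecq hxq hRqi.
  have [hq0 hqsum] := hrule Rq Om hecq.
  case: (pselect (exists j, phi Rq Om j < pp)) => [[j hj]|hno].
    have hij : i != j by apply/eqP => hij; move: hj; rewrite -hij hxq; lra.
    have := hef Rq Om hecq i j hij; rewrite hRqi hxq /vpref /= lee_fin.
    rewrite (ltW hj) (negbTE (_ : ~~ (x <= pp))); last by rewrite -ltNge.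
    have hy0 := hq0 j.
    have haO : a * pp = (x - pp) / 2 by rewrite /a divfK // gt_eqF.
    have : a * (pp - phi Rq Om j) <= a * pp by rewrite ler_pM2l //; lra.
    lra.
  have hle : forall j, 0 <= phi Rq Om j - pp.
    move=> j; rewrite subr_ge0 leNgt; apply/negP => hj; apply: hno; by exists j.
  have := sum_ge_term i hle; rewrite sumrB hOmpp hqsum subrr hxq; lra.
Qed.
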